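(* Let $P(x)=x^\alpha=x_1^{\alpha_1}\cdots x_d^{\alpha_d}$ for $\alpha=(\alpha_1,\dots,\alpha_d)\in\mathbb{N}_0^d$ with $\|\alpha\|_1=k\ge2$. For any $W,L\in\mathbb{N}$ there exists a ReLU network $\phi:\mathbb{R}^d\to\mathbb{R}$, $\phi\in\mathcal{NN}(9W+k-1,(k-1)(L+1))$, such that for all $x,y\in[-1,1]^d$, $\phi(x)\in[-1,1]$ and $$|\phi(x)-P(x)|\le6(k-1)W^{-L},\qquad|\phi(x)-\phi(y)|\le7^{k-1}\|\alpha\|_\infty\|x-y\|_1.$$
   Context: $\sigma(x)=\max(x,0)$. $\mathcal{NN}(W,L)$: functions $\phi(x)=T_L(\sigma(T_{L-1}(\cdots\sigma(T_0(x))\cdots)))$ with affine maps $T_l$, ReLU componentwise, all hidden layer sizes $\le W$ and depth $\le L$. $\|\alpha\|_1=\sum_i\alpha_i$, $\|\alpha\|_\infty=\max_i\alpha_i$. *)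

(* Defs.v *)
From HB Require Import structures.
From mathcomp Require Import all_boot all_order all_algebra.
From mathcomp Require Import reals.
Set Implicit Arguments. Unset Strict Implicit. Unset Printing Implicit Defensive.
Import Order.TTheory GRing.Theory Num.Theory.
Local Open Scope ring_scope.

Definition relu {R : realType} (x : R) : R := Num.max x 0.

(* NNexact W Lh n f : f : R^n -> R is computed by a ReLU network with exactly
   Lh hidden (ReLU) layers, each of width <= W:
   f = T_Lh o sigma o T_{Lh-1} o ... o sigma o T_0, T_l affine. *)
Inductive NNexact {R : realType} (W : nat) : nat -> forall n : nat, ('cV[R]_n -> R) -> Prop :=
| NN_affine (n : nat) (A : 'rV[R]_n) (b : R) :
    NNexact W 0 (fun x : 'cV[R]_n => (A *m x) 0 0 + b)
| NN_layer (Lh n m : nat) (A : 'M[R]_(m, n)) (b : 'cV[R]_m) (f : 'cV[R]_m -> R) :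
    (m <= W)%N -> NNexact W Lh f ->
    NNexact W Lh.+1 (fun x : 'cV[R]_n => f (map_mx relu (A *m x + b))).

Definition NN {R : realType} (W L n : nat) (f : 'cV[R]_n -> R) : Prop :=
  exists2 Lh, (Lh <= L)%N & NNexact W Lh f.

Definition monomial {R : realType} (d : nat) (alpha : 'I_d -> nat) (x : 'cV[R]_d) : R :=
  \prod_(i < d) (x i 0) ^+ alpha i.

Definition norm1 {R : realType} (d : nat) (x : 'cV[R]_d) : R := \sum_(i < d) `|x i 0|.

Definition in_cube {R : realType} (d : nat) (x : 'cV[R]_d) : Prop :=
  forall i : 'I_d, -1 <= x i 0 <= 1.

(* Main.v *)
Require Import Defs.
From HB Require Import structures.
From mathcomp Require Import all_boot all_order all_algebra.
From mathcomp Require Import reals.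
From mathcomp.algebra_tactics Require Import ring lra.
From Stdlib Require Import FunctionalExtensionality.
Import Order.TTheory GRing.Theory Num.Theory.
Local Open Scope ring_scope.

Section Relu.
Variable R : realType.
Lemma relu_id (x : R) : 0 <= x -> relu x = x.
Proof. by move=> h; rewrite /relu; apply/max_idPl. Qed.
Lemma relu_0 (x : R) : x <= 0 -> relu x = 0.
Proof. by move=> h; rewrite /relu; apply/max_idPr. Qed.
Lemma relu_ge0 (x : R) : 0 <= relu x.
Proof. by rewrite /relu le_max lexx orbT. Qed.
Lemma relu_abs (x : R) : relu x + relu (- x) = `|x|.
Proof.
case: (lerP 0 x) => h.
  by rewrite relu_id // relu_0 ?addr0 ?ger0_norm // oppr_le0.
by rewrite relu_0 ?(ltW h) // relu_id ?ltr0_norm ?add0r // oppr_ge0 ltW.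
Qed.
End Relu.

Definition tooth {R : realType} (N : nat) (z : R) (i : nat) : R :=
  relu (z - i%:R / N%:R).
Definition cZ {R : realType} (N i : nat) : R :=
  if i == 0%N then N%:R else (-1) ^+ i * (2 * N%:R).
Definition dP {R : realType} (N i : nat) : R :=
  if i == 0%N then (N%:R - 1) / N%:R else - (2 / N%:R).
Definition Zf {R : realType} (N : nat) (z : R) : R :=
  \sum_(i < N) cZ N i * tooth N z i.
Definition psi {R : realType} (N : nat) (z : R) : R :=
  \sum_(i < N) dP N i * tooth N z i.
Definition phi {R : realType} (t : R) : R := t * (1 - t).

Section Scalar.
Variable R : realType.
Variable N : nat.
Hypothesis N0 : (0 < N)%N.
Local Notation Nr := (N%:R : R).

Lemma Nr_gt0 : 0 < Nr. Proof. by rewrite ltr0n. Qed.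
Lemma Nr_neq0 : Nr != 0. Proof. by rewrite pnatr_eq0 -lt0n. Qed.

Lemma tooth_lin (z : R) (i : nat) : i%:R <= Nr * z -> tooth N z i = z - i%:R / Nr.
Proof.
move=> h; rewrite /tooth relu_id //.
have -> : z - i%:R / Nr = (Nr * z - i%:R) * Nr^-1.
  by field; exact: Nr_neq0.
by apply: mulr_ge0; [rewrite subr_ge0 | rewrite invr_ge0 ltW // Nr_gt0].
Qed.

Lemma tooth_zero (z : R) (i : nat) : Nr * z <= i%:R -> tooth N z i = 0.
Proof.
move=> h; rewrite /tooth relu_0 //.
have -> : z - i%:R / Nr = (Nr * z - i%:R) * Nr^-1.
  by field; exact: Nr_neq0.
by apply: mulr_le0_ge0; [rewrite subr_le0 | rewrite invr_ge0 ltW // Nr_gt0].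
Qed.

Lemma cell (z : R) : 0 <= z <= 1 ->
  exists m, (m < N)%N /\ m%:R <= Nr * z <= m%:R + 1.
Proof.
move=> /andP [z0 z1].
have Nz0 : 0 <= Nr * z by rewrite mulr_ge0 // ltW // Nr_gt0.
have NzN : Nr * z <= Nr by rewrite -{2}(mulr1 Nr) ler_wpM2l // ltW // Nr_gt0.
have /andP [t1 t2] := truncn_itv Nz0.
case: (ltnP (Num.truncn (Nr * z)) N) => ht.
  by exists (Num.truncn (Nr * z)); split => //; rewrite t1 /= natr1 ltW.
exists N.-1; split; first by rewrite prednK.
have hN : Nr <= Nr * z.
  by apply: le_trans t1; rewrite ler_nat.
have -> : Nr * z = Nr by apply/eqP; rewrite eq_le NzN hN.
by rewrite natr1 prednK // lexx andbT ler_nat leq_pred.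
Qed.

Lemma sum_cell (a : nat -> R) {z : R} {m : nat} : (m < N)%N ->
  m%:R <= Nr * z <= m%:R + 1 ->
  \sum_(i < N) a i * tooth N z i = \sum_(i < m.+1) a i * (z - i%:R / Nr).
Proof.
move=> mN /andP [h1 h2].
rewrite -(big_mkord xpredT (fun i => a i * tooth N z i)).
rewrite (big_cat_nat (leq0n m.+1) mN) /=.
rewrite [X in _ + X]big_nat_cond [X in _ + X]big1 ?addr0; last first.
  move=> i /andP [/andP [hi _] _]; rewrite tooth_zero ?mulr0 //.
  by apply: (le_trans h2); rewrite natr1 ler_nat.
rewrite big_mkord; apply: eq_bigr => i _.
rewrite tooth_lin //; apply: le_trans h1; rewrite ler_nat -ltnS; exact: ltn_ord.
Qed.

Lemma sumZ_closed (m : nat) (z : R) :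
  \sum_(i < m.+1) cZ N i * (z - i%:R / Nr) = (-1) ^+ m * (Nr * z - m%:R) + (odd m)%:R.
Proof.
elim: m => [|m IH].
  rewrite big_ord1 /cZ /= expr0 mul1r addr0; field; exact: Nr_neq0.
rewrite big_ord_recr /= IH /cZ /= -!natr1.
rewrite -[(-1) ^+ m]signr_odd -[(-1) ^+ m.+1]signr_odd oddS.
case: (odd m) => /=; field; exact: Nr_neq0.
Qed.

Lemma sumP_closed (m : nat) (z : R) :
  \sum_(i < m.+1) dP N i * (z - i%:R / Nr) =
  ((Nr - 1 - 2 * m%:R) * z + m%:R * (m%:R + 1) / Nr) / Nr.
Proof.
elim: m => [|m IH].
  rewrite big_ord1 /dP /=; field; exact: Nr_neq0.
rewrite big_ord_recr /= IH /dP /= -!natr1.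
field; exact: Nr_neq0.
Qed.

Lemma Zf_cell {z : R} {m : nat} : (m < N)%N ->
  m%:R <= Nr * z <= m%:R + 1 ->
  Zf N z = if odd m then 1 - (Nr * z - m%:R) else Nr * z - m%:R.
Proof.
move=> mN hm; rewrite /Zf (sum_cell _ mN hm) sumZ_closed -signr_odd.
by case: (odd m) => /=; ring.
Qed.

Lemma Zf_01 (z : R) : 0 <= z <= 1 -> 0 <= Zf N z <= 1.
Proof.
move=> /cell [m [mN hm]]; rewrite (Zf_cell mN hm).
move: hm => /andP [h1 h2].
by case: (odd m); apply/andP; split; lra.
Qed.

Lemma key (z : R) : 0 <= z <= 1 -> phi z - psi N z = phi (Zf N z) / Nr ^+ 2.
Proof.
move=> /cell [m [mN hm]]; rewrite (Zf_cell mN hm) /psi (sum_cell _ mN hm) sumP_closed.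
rewrite /phi.
by case: (odd m); field; exact: Nr_neq0.
Qed.

Lemma Zf_dist_le {z : R} {e : nat} : 0 <= z <= 1 -> ~~ odd e ->
  Zf N z <= `|Nr * z - e%:R|.
Proof.
move=> /cell [m [mN hm]] he; rewrite (Zf_cell mN hm).
move: hm => /andP [h1 h2].
case: (leqP e m) => hem.
  have hr : e%:R <= m%:R :> R by rewrite ler_nat.
  case ho: (odd m).
    have hem' : (e <= m.-1)%N.
      case: m hem ho {mN h1 h2 hr} => [|m] //= hem ho.
      rewrite leq_eqVlt in hem; case/orP: hem => [/eqP E|] //.
      by move: he; rewrite E /= ho.
    have hr' : e%:R + 1 <= m%:R :> R.
      rewrite natr1 ler_nat; case: m hem' ho {mN h1 h2 hr hem} => [|m] //= hem' _.
    rewrite ger0_norm; lra.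
  rewrite ger0_norm; lra.
case ho: (odd m).
  have hr : m%:R + 1 <= e%:R :> R by rewrite natr1 ler_nat.
  rewrite ler0_norm; lra.
have hem' : (m.+2 <= e)%N.
  rewrite ltn_neqAle hem andbT; apply/negP => /eqP E.
  by move: he; rewrite -E /= ho.
have hr : (m.+2)%:R <= e%:R :> R by rewrite ler_nat.
rewrite -!natr1 in hr.
rewrite ler0_norm; lra.
Qed.

Lemma Zf_dist_eq (z : R) : 0 <= z <= 1 ->
  exists e, ~~ odd e /\ Zf N z = `|Nr * z - e%:R|.
Proof.
move=> /cell [m [mN hm]]; rewrite (Zf_cell mN hm).
move: hm => /andP [h1 h2].
case ho: (odd m).
  exists m.+1; split; first by rewrite /= ho.
  rewrite -natr1 ler0_norm; lra.
exists m; split; first by rewrite ho.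
rewrite ger0_norm; lra.
Qed.

Lemma Zf_lip (z z' : R) : 0 <= z <= 1 -> 0 <= z' <= 1 ->
  `|Zf N z - Zf N z'| <= Nr * `|z - z'|.
Proof.
move=> hz hz'.
have aux : forall a b : R, 0 <= a <= 1 -> 0 <= b <= 1 -> Zf N a - Zf N b <= Nr * `|a - b|.
  move=> a b ha hb.
  have [e [he ->]] := Zf_dist_eq _ hb.
  have h := Zf_dist_le ha he.
  have : `|Nr * a - e%:R| <= `|Nr * b - e%:R| + Nr * `|a - b|.
    have -> : Nr * a - e%:R = (Nr * b - e%:R) + Nr * (a - b) by ring.
    by rewrite (le_trans (ler_normD _ _)) // normrM ger0_norm // ltW // Nr_gt0.
  lra.
rewrite ler_norml; apply/andP; split.
  have := aux _ _ hz' hz; rewrite distrC; lra.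
exact: aux.
Qed.

Lemma Zf_0 : Zf N (0:R) = 0.
Proof.
have h0 : (0 <= (0:R) <= 1) by rewrite lexx ler01.
have [e [he E]] := Zf_dist_eq _ h0.
have := Zf_01 _ h0; have := Zf_dist_le (e:=0) h0 (isT : ~~ odd 0).
by rewrite mulr0 subr0 normr0 => h1 /andP [h2 _]; apply/eqP; rewrite eq_le h1 h2.
Qed.

Lemma Zf_1 : Zf N (1:R) = 0 \/ Zf N (1:R) = 1.
Proof.
have h1 : (0 <= (1:R) <= 1) by rewrite lexx ler01.
have [m [mN hm]] := cell _ h1.
have Em : m%:R = Nr - 1.
  move: hm; rewrite mulr1 => /andP [a b].
  have : (m.+1 <= N)%N := mN.
  rewrite -(ler_nat R) -natr1 => c; lra.
rewrite (Zf_cell mN hm) Em mulr1.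
by case: (odd m); [left | right]; ring.
Qed.

Lemma phi_lip (a b : R) : 0 <= a <= 1 -> 0 <= b <= 1 -> `|phi a - phi b| <= `|a - b|.
Proof.
move=> /andP [a0 a1] /andP [b0 b1].
have -> : phi a - phi b = (a - b) * (1 - a - b) by rewrite /phi; ring.
rewrite normrM -{2}(mulr1 `|a - b|) ler_wpM2l // ler_norml; apply/andP; split; lra.
Qed.

Lemma phi_bnd (a : R) : 0 <= a <= 1 -> 0 <= phi a <= 1/4.
Proof.
move=> /andP [a0 a1]; rewrite /phi; apply/andP; split; first by rewrite mulr_ge0 // subr_ge0.
have : 0 <= (a - 1/2)^+2 by rewrite sqr_ge0.
rewrite expr2; nra.
Qed.

End Scalar.
Arguments relu_id {R}. Arguments relu_0 {R}. Arguments relu_ge0 {R}. Arguments relu_abs {R}.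
Arguments Nr_gt0 {R N}. Arguments Nr_neq0 {R N}. Arguments tooth_lin {R N}. Arguments tooth_zero {R N}.
Arguments cell {R N}. Arguments sum_cell {R N}. Arguments sumZ_closed {R N}. Arguments sumP_closed {R N}.
Arguments Zf_cell {R N}. Arguments Zf_01 {R N} N0 {z}. Arguments key {R N} N0 {z}. Arguments Zf_dist_le {R N}.
Arguments Zf_dist_eq {R N} N0 {z}. Arguments Zf_lip {R N} N0 {z z'}. Arguments Zf_0 {R N}. Arguments Zf_1 {R N}.
Arguments phi_lip {R a b}. Arguments phi_bnd {R a}.

Definition Zit {R : realType} (N r : nat) (z : R) : R := iter r (Zf N) z.
Definition qq {R : realType} (N : nat) : R := (N%:R ^+ 2)^-1.
Fixpoint Acc {R : realType} (N r : nat) (u : R) : R :=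
  match r with
  | 0%N => u
  | r'.+1 => Acc N r' u - qq N ^+ r' * psi N (Zit N r' u)
  end.
Definition Mf {R : realType} (N L : nat) (a b : R) : R :=
  Acc N L (`|a + b| / 2) - Acc N L (`|a - b| / 2).

Section Iter.
Context {R : realType}.
Context {N : nat}.
Hypothesis N0 : (0 < N)%N.
Local Notation Nr := (N%:R : R).

Lemma Zit_01 r {z : R} : 0 <= z <= 1 -> 0 <= Zit N r z <= 1.
Proof. move=> hz; elim: r => [|r IH] //=; exact: Zf_01. Qed.

Lemma Zit_lip r {z z' : R} : 0 <= z <= 1 -> 0 <= z' <= 1 ->
  `|Zit N r z - Zit N r z'| <= Nr ^+ r * `|z - z'|.
Proof.
move=> hz hz'; elim: r => [|r IH]; first by rewrite expr0 mul1r.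
rewrite /Zit /= -/(Zit N r z) -/(Zit N r z').
apply: le_trans (Zf_lip N0 (Zit_01 r hz) (Zit_01 r hz')) _.
rewrite exprS -mulrA ler_wpM2l //; exact: ltW (Nr_gt0 N0).
Qed.

Lemma Zit_1 r : Zit N r (1:R) = 0 \/ Zit N r (1:R) = 1.
Proof.
elim: r => [|r IH]; first by right.
rewrite /Zit /= -/(Zit N r 1).
case: IH => ->; [left; exact: Zf_0 | exact: Zf_1].
Qed.

Lemma qq_ge0 : 0 <= qq N :> R.
Proof. by rewrite /qq invr_ge0 exprn_ge0 // ler0n. Qed.

Lemma qqN r : qq N ^+ r * Nr ^+ r <= 1.
Proof.
rewrite -exprMn; apply: exprn_ile1.
  by rewrite mulr_ge0 // ?qq_ge0 // ler0n.
have h1 : 1 <= Nr by rewrite ler1n.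
have -> : qq N * Nr = Nr^-1 by rewrite /qq; field; exact: Nr_neq0 N0.
by rewrite invr_le1 // ?unitfE ?Nr_neq0 // (lt_le_trans ltr01).
Qed.

Lemma Acc_eq r {u : R} : 0 <= u <= 1 -> Acc N r u = u ^+ 2 + qq N ^+ r * phi (Zit N r u).
Proof.
move=> hu; elim: r => [|r IH] /=.
  by rewrite expr0 mul1r /phi /Zit /=; ring.
rewrite IH.
have := key N0 (Zit_01 r hu).
rewrite /Zit /= -/(Zit N r u) => hk.
have -> : phi (Zf N (Zit N r u)) = (phi (Zit N r u) - psi N (Zit N r u)) * Nr ^+ 2.
  by rewrite hk; field; exact: Nr_neq0 N0.
rewrite [qq N ^+ r.+1]exprS /qq; field; exact: Nr_neq0 N0.
Qed.

Lemma Acc_err r {u : R} : 0 <= u <= 1 -> 0 <= Acc N r u - u ^+ 2 <= qq N ^+ r / 4.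
Proof.
move=> hu; rewrite Acc_eq // [_ + _ - _]addrC addKr.
have /andP [p0 p1] := phi_bnd (Zit_01 r hu).
have hq : 0 <= qq N ^+ r :> R by rewrite exprn_ge0 // qq_ge0.
rewrite mulr_ge0 //=; apply: le_trans (ler_wpM2l hq p1) _; rewrite mul1r //=.
Qed.

Lemma Acc_ge0 r {u : R} : 0 <= u <= 1 -> 0 <= Acc N r u.
Proof.
move=> hu; have /andP [h _] := Acc_err r hu.
have : 0 <= u ^+ 2 by rewrite sqr_ge0.
lra.
Qed.

Lemma Acc_le1 r {u : R} : 0 <= u <= 1 -> Acc N r u <= 1.
Proof.
move=> hu; rewrite Acc_eq //.
have h1 : 0 <= (1:R) <= 1 by rewrite lexx ler01.
have hphi1 : phi (Zit N r 1) = 0 :> R by case: (Zit_1 r) => ->; rewrite /phi; ring.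
have hp : phi (Zit N r u) <= Nr ^+ r * (1 - u).
  have := phi_lip (Zit_01 r hu) (Zit_01 r h1); rewrite hphi1 subr0 => h.
  have h0 : 0 <= phi (Zit N r u) by case/andP: (phi_bnd (Zit_01 r hu)).
  rewrite (ger0_norm h0) in h.
  apply: (le_trans h); apply: (le_trans (Zit_lip r hu h1)).
  by rewrite distrC ger0_norm // subr_ge0; case/andP: hu.
have hq : 0 <= qq N ^+ r :> R by rewrite exprn_ge0 // qq_ge0.
have : qq N ^+ r * phi (Zit N r u) <= (qq N ^+ r * Nr ^+ r) * (1 - u).
  by rewrite -mulrA ler_wpM2l.
have := qqN r.
have u1 : 0 <= 1 - u by case/andP: hu => _ ?; lra.
move: hu => /andP [u0 u1'].
set a := qq N ^+ r * Nr ^+ r.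
have : a * (1 - u) <= 1 - u by rewrite -{2}(mul1r (1 - u)) ler_wpM2r // qqN.
rewrite expr2; nra.
Qed.

Lemma Acc_lip r {u u' : R} : 0 <= u <= 1 -> 0 <= u' <= 1 ->
  `|Acc N r u - Acc N r u'| <= 3 * `|u - u'|.
Proof.
move=> hu hu'; rewrite !Acc_eq //.
have -> : u ^+ 2 + qq N ^+ r * phi (Zit N r u) - (u' ^+ 2 + qq N ^+ r * phi (Zit N r u')) =
  (u - u') * (u + u') + qq N ^+ r * (phi (Zit N r u) - phi (Zit N r u')) by ring.
apply: (le_trans (ler_normD _ _)).
have hq : 0 <= qq N ^+ r :> R by rewrite exprn_ge0 // qq_ge0.
have h1 : `|(u - u') * (u + u')| <= 2 * `|u - u'|.
  rewrite normrM mulrC ler_wpM2r // ger0_norm; move: hu hu' => /andP [? ?] /andP [? ?]; lra.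
have h2 : `|qq N ^+ r * (phi (Zit N r u) - phi (Zit N r u'))| <= `|u - u'|.
  rewrite normrM (ger0_norm hq).
  apply: (le_trans (ler_wpM2l hq (phi_lip (Zit_01 r hu) (Zit_01 r hu')))).
  apply: (le_trans (ler_wpM2l hq (Zit_lip r hu hu'))).
  by rewrite mulrA -{2}(mul1r `|u - u'|) ler_wpM2r // qqN.
lra.
Qed.

Lemma half_abs_01 {a b : R} : -1 <= a <= 1 -> -1 <= b <= 1 -> 0 <= `|a + b| / 2 <= 1.
Proof.
move=> /andP [? ?] /andP [? ?]; apply/andP; split.
  by rewrite divr_ge0.
rewrite ler_pdivrMr // mul1r ler_norml; apply/andP; split; lra.
Qed.

Context {L : nat}.

Lemma Mf_range {a b : R} : -1 <= a <= 1 -> -1 <= b <= 1 -> -1 <= Mf N L a b <= 1.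
Proof.
move=> ha hb.
have hu := half_abs_01 ha hb.
have hb' : -1 <= - b <= 1 by move: hb => /andP [? ?]; apply/andP; split; lra.
have hv := half_abs_01 ha hb'.
have := Acc_ge0 L hu; have := Acc_le1 L hu; have := Acc_ge0 L hv; have := Acc_le1 L hv.
move=> h1 h2 h3 h4; rewrite /Mf; apply/andP; split; lra.
Qed.

Lemma Mf_err {a b : R} : -1 <= a <= 1 -> -1 <= b <= 1 -> `|Mf N L a b - a * b| <= qq N ^+ L / 4.
Proof.
move=> ha hb.
have hu := half_abs_01 ha hb.
have hb' : -1 <= - b <= 1 by move: hb => /andP [? ?]; apply/andP; split; lra.
have hv := half_abs_01 ha hb'.
have := Acc_err L hu; have := Acc_err L hv.
have E : a * b = (`|a + b| / 2) ^+ 2 - (`|a - b| / 2) ^+ 2.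
  by rewrite !expr_div_n (real_normK (num_real (a+b))) (real_normK (num_real (a-b))); field.
rewrite /Mf E ler_norml => /andP [? ?] /andP [? ?]; apply/andP; split; lra.
Qed.

Lemma Mf_lip {a b a' b' : R} : -1 <= a <= 1 -> -1 <= b <= 1 ->
  -1 <= a' <= 1 -> -1 <= b' <= 1 ->
  `|Mf N L a b - Mf N L a' b'| <= 3 * (`|a - a'| + `|b - b'|).
Proof.
move=> ha hb ha' hb'.
have nb : forall c : R, -1 <= c <= 1 -> -1 <= - c <= 1.
  by move=> c /andP [? ?]; apply/andP; split; lra.
have l1 := Acc_lip L (half_abs_01 ha hb) (half_abs_01 ha' hb').
have l2 := Acc_lip L (half_abs_01 ha (nb _ hb)) (half_abs_01 ha' (nb _ hb')).
have dd : forall x y : R, `|x / 2 - y / 2| <= `|x - y| / 2.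
  by move=> x y; rewrite -mulrBl normrM [`|2^-1|]ger0_norm // invr_ge0 ler0n.
have d1 := dd `|a + b| `|a' + b'|.
have d2 := dd `|a - b| `|a' - b'|.
have e1 : `| `|a + b| - `|a' + b'| | <= `|a - a'| + `|b - b'|.
  apply: (le_trans (ler_dist_dist _ _)).
  have -> : a + b - (a' + b') = (a - a') + (b - b') by ring.
  exact: ler_normD.
have e2 : `| `|a - b| - `|a' - b'| | <= `|a - a'| + `|b - b'|.
  apply: (le_trans (ler_dist_dist _ _)).
  have -> : a - b - (a' - b') = (a - a') - (b - b') by ring.
  exact: ler_normB.
rewrite /Mf.
move: l1 l2 d1 d2 e1 e2.
set u1 := `|a + b| / 2; set u2 := `|a' + b'| / 2.
set v1 := `|a - b| / 2; set v2 := `|a' - b'| / 2.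
set A1 := Acc N L u1; set A2 := Acc N L u2.
set B1 := Acc N L v1; set B2 := Acc N L v2.
move=> l1 l2 d1 d2 e1 e2.
have -> : A1 - B1 - (A2 - B2) = (A1 - A2) - (B1 - B2) by ring.
apply: (le_trans (ler_normB _ _)).
move: l1 l2 d1 d2 e1 e2.
set D := `|a - a'| + `|b - b'|.
set U := `|u1 - u2|. set V := `|v1 - v2|.
set X1 := `|A1 - A2|. set X2 := `|B1 - B2|.
set Y1 := `| `|a + b| - `|a' + b'| |. set Y2 := `| `|a - b| - `|a' - b'| |.
move=> l1 l2 d1 d2 e1 e2.
lra.
Qed.

End Iter.

Inductive NNv {R : realType} (W : nat) : nat -> forall n m : nat, ('cV[R]_n -> 'cV[R]_m) -> Prop :=
| NNv_aff n m (A : 'M[R]_(m, n)) (b : 'cV[R]_m) : NNv W 0 n m (fun x => A *m x + b)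
| NNv_lay Lh n p m (A : 'M[R]_(p, n)) (b : 'cV[R]_p) (G : 'cV[R]_p -> 'cV[R]_m) :
    (p <= W)%N -> NNv W Lh p m G -> NNv W Lh.+1 n m (fun x => G (map_mx relu (A *m x + b))).
Arguments NNv {R} W _ {n m} _.
Arguments NNv_aff {R} W {n m}.
Arguments NNv_lay {R W Lh n p m} A b {G}.

Definition affine {R : realType} n m (G : 'cV[R]_n -> 'cV[R]_m) :=
  exists A b, forall x, G x = A *m x + b.
Definition saff {R : realType} n (f : 'cV[R]_n -> R) :=
  exists (a : 'rV[R]_n) c, forall x, f x = (a *m x) 0 0 + c.

Arguments affine {R n m}.
Arguments saff {R n}.

Section NNvTheory.
Context {R : realType}.

Lemma NNv_ext {W Lh n m} {F G : 'cV[R]_n -> 'cV[R]_m} :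
  NNv W Lh F -> (forall x, F x = G x) -> NNv W Lh G.
Proof. by move=> h e; rewrite -(functional_extensionality _ _ e). Qed.

Lemma NNv_affine W {n m} {G : 'cV[R]_n -> 'cV[R]_m} : affine G -> NNv W 0 G.
Proof. by move=> [A [b e]]; apply: NNv_ext (NNv_aff W A b) _ => x; rewrite e. Qed.

Lemma NNv_mono {W W' Lh n m} {F : 'cV[R]_n -> 'cV[R]_m} :
  (W <= W')%N -> NNv W Lh F -> NNv W' Lh F.
Proof.
move=> hW; elim=> {Lh n m F} [n m A b | Lh n p m A b G hp _ IH].
  exact: NNv_aff.
by apply: NNv_lay IH; apply: leq_trans hW.
Qed.

Lemma NNv_pre {W Lh p m} {G : 'cV[R]_p -> 'cV[R]_m} :
  NNv W Lh G -> forall n (P : 'cV[R]_n -> 'cV[R]_p), affine P -> NNv W Lh (fun x => G (P x)).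
Proof.
elim=> {Lh p m G} [p m A b | Lh p q m A b G hq hG IH] n P [B [c e]].
  apply: NNv_ext (NNv_aff W (A *m B) (A *m c + b)) _ => x.
  by rewrite e mulmxDr mulmxA addrA.
apply: NNv_ext (NNv_lay (A *m B) (A *m c + b) hq hG) _.
by move=> x /=; rewrite e mulmxDr mulmxA addrA.
Qed.

Lemma NNv_comp {W L1 n p} {F : 'cV[R]_n -> 'cV[R]_p} :
  NNv W L1 F -> forall L2 m (G : 'cV[R]_p -> 'cV[R]_m), NNv W L2 G ->
  NNv W (L1 + L2) (fun x => G (F x)).
Proof.
elim=> {L1 n p F} [n p A b | Lh n q p A b F hq _ IH] L2 m G hG.
  rewrite add0n; exact: (NNv_pre hG n (fun x => A *m x + b) (ex_intro _ A (ex_intro _ b (fun _ => erefl)))).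
rewrite addSn; exact: NNv_lay hq (IH _ _ _ hG).
Qed.

Lemma NNv_layer1 {W n p} {P : 'cV[R]_n -> 'cV[R]_p} :
  affine P -> (p <= W)%N -> NNv W 1 (fun x => map_mx relu (P x)).
Proof.
move=> [A [b e]] hp.
have h0 : NNv W 0 (fun y : 'cV[R]_p => 1%:M *m y + 0) := NNv_aff W 1%:M 0.
apply: NNv_ext (NNv_lay A b hp h0) _ => x.
by rewrite mul1mx addr0 e.
Qed.

Lemma NNv_row {W Lh n m} {F : 'cV[R]_n -> 'cV[R]_m} :
  NNv W Lh F -> forall (a : 'rV[R]_m) (c : R), NNexact W Lh (fun x => (a *m F x) 0 0 + c).
Proof.
elim=> {Lh n m F} [n m A b | Lh n p m A b G hp _ IH] a c.
  have E : (fun x : 'cV[R]_n => (a *m (A *m x + b)) 0 0 + c) =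
           (fun x => ((a *m A) *m x) 0 0 + ((a *m b) 0 0 + c)).
    apply: functional_extensionality => x.
    by rewrite mulmxDr mulmxA [in LHS]mxE addrA.
  by rewrite E; exact: NN_affine.
exact: (NN_layer A b hp (IH a c)).
Qed.

Lemma NNv_entry {W Lh n m} {F : 'cV[R]_n -> 'cV[R]_m} (i : 'I_m) :
  NNv W Lh F -> NNexact W Lh (fun x => F x i 0).
Proof.
move=> h; have := NNv_row h (row i 1%:M) 0.
have -> // : (fun x => (row i 1%:M *m F x) 0 0 + 0) = (fun x => F x i 0).
apply: functional_extensionality => x.
by rewrite addr0 -row_mul mul1mx mxE.
Qed.

Lemma aff_const {n m} (c : 'cV[R]_m) : affine (fun _ : 'cV[R]_n => c).
Proof. by exists 0, c => x; rewrite mul0mx add0r. Qed.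

Lemma aff_id n : affine (fun x : 'cV[R]_n => x).
Proof. by exists 1%:M, 0 => x; rewrite mul1mx addr0. Qed.

Lemma aff_comp {n p m} {P : 'cV[R]_n -> 'cV[R]_p} {G : 'cV[R]_p -> 'cV[R]_m} :
  affine P -> affine G -> affine (fun x => G (P x)).
Proof.
move=> [A [b e]] [B [c f]]; exists (B *m A), (B *m b + c) => x.
by rewrite f e mulmxDr mulmxA addrA.
Qed.

Lemma aff_col {n m1 m2} {G1 : 'cV[R]_n -> 'cV[R]_m1} {G2 : 'cV[R]_n -> 'cV[R]_m2} :
  affine G1 -> affine G2 -> affine (fun x => col_mx (G1 x) (G2 x)).
Proof.
move=> [A1 [b1 e1]] [A2 [b2 e2]]; exists (col_mx A1 A2), (col_mx b1 b2) => x.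
by rewrite e1 e2 mul_col_mx add_col_mx.
Qed.

Lemma saff_ext {n} {f g : 'cV[R]_n -> R} : saff f -> (forall x, f x = g x) -> saff g.
Proof. by move=> [a [c e]] h; exists a, c => x; rewrite -h e. Qed.

Lemma aff_entries {n m} {G : 'cV[R]_n -> 'cV[R]_m} :
  (forall i, saff (fun x => G x i 0)) -> affine G.
Proof.
move=> h.
have [a ha] := fin_all_exists h.
have [c hc] := fin_all_exists ha.
exists (\matrix_(i, j) (a i) 0 j), (\col_i c i) => x.
apply/matrixP => i j; rewrite (ord1 j) hc !mxE; congr (_ + _).
by apply: eq_bigr => l _; rewrite [X in _ = X * _]mxE.
Qed.

Lemma saff_const {n} (c : R) : saff (fun _ : 'cV[R]_n => c).
Proof. by exists 0, c => x; rewrite mul0mx mxE add0r. Qed.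

Lemma saff_aff {n m} {G : 'cV[R]_n -> 'cV[R]_m} (i : 'I_m) :
  affine G -> saff (fun x => G x i 0).
Proof.
move=> [A [b e]]; exists (row i A), (b i 0) => x.
by rewrite e -row_mul !mxE.
Qed.

Lemma saff_coord {n} (i : 'I_n) : saff (fun x : 'cV[R]_n => x i 0).
Proof. exact: (saff_aff i (aff_id n)). Qed.

Lemma saff_add {n} {f g : 'cV[R]_n -> R} : saff f -> saff g -> saff (fun x => f x + g x).
Proof.
move=> [a [c e]] [a' [c' e']]; exists (a + a'), (c + c') => x.
by rewrite e e' mulmxDl [X in _ = X + _]mxE addrACA.
Qed.

Lemma saff_scale {n} (k : R) {f : 'cV[R]_n -> R} : saff f -> saff (fun x => k * f x).
Proof.
move=> [a [c e]]; exists (k *: a), (k * c) => x.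
by rewrite e -scalemxAl [X in _ = X + _]mxE mulrDr.
Qed.

Lemma saff_opp {n} {f : 'cV[R]_n -> R} : saff f -> saff (fun x => - f x).
Proof.
move=> h; apply: saff_ext (saff_scale (-1) h) _ => x; by rewrite mulN1r.
Qed.

Lemma saff_sub {n} {f g : 'cV[R]_n -> R} : saff f -> saff g -> saff (fun x => f x - g x).
Proof. by move=> hf hg; apply: saff_add hf (saff_opp hg). Qed.

Lemma saff_sum {n} p (F : 'I_p -> 'cV[R]_n -> R) :
  (forall j, saff (F j)) -> saff (fun x => \sum_(j < p) F j x).
Proof.
elim: p F => [|p IH] F h.
  by apply: saff_ext (saff_const 0) _ => x; rewrite big_ord0.
apply: saff_ext (saff_add (IH (fun j => F (widen_ord (leqnSn p) j)) (fun j => h _)) (h ord_max)) _.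
by move=> x; rewrite big_ord_recr.
Qed.

Lemma saff_comp {n p} {P : 'cV[R]_n -> 'cV[R]_p} {f : 'cV[R]_p -> R} :
  affine P -> saff f -> saff (fun x => f (P x)).
Proof.
move=> [B [c e]] [a [d f']]; exists (a *m B), ((a *m c) 0 0 + d) => x.
by rewrite f' e mulmxDr mulmxA mxE addrA.
Qed.

Lemma aff_usub n1 n2 : affine (fun x : 'cV[R]_(n1 + n2) => usubmx x).
Proof.
apply: aff_entries => i; apply: saff_ext (saff_coord (lshift n2 i)) _ => x.
by rewrite mxE.
Qed.

Lemma aff_dsub n1 n2 : affine (fun x : 'cV[R]_(n1 + n2) => dsubmx x).
Proof.
apply: aff_entries => i; apply: saff_ext (saff_coord (rshift n1 i)) _ => x.
by rewrite mxE.
Qed.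

End NNvTheory.

Section Block.
Variable R : realType.
Variables N L k : nat.
Hypothesis N0 : (0 < N)%N.
Hypothesis L0 : (0 < L)%N.
Variables ja jb : 'I_k.

Local Notation C := 'cV[R]_(1 + N).
Local Notation S := 'cV[R]_(k + ((1 + N) + (1 + N))).
Local Notation rl v := (map_mx relu v).

Definition acc (c : C) : R := (usubmx c) 0 0.
Definition teeth (c : C) : 'cV[R]_N := dsubmx c.
Definition ZS (t : 'cV[R]_N) : R := \sum_(i < N) cZ N i * t i 0.
Definition PS (t : 'cV[R]_N) : R := \sum_(i < N) dP N i * t i 0.
Definition mkC (a z : R) : C := col_mx (\col_(i < 1) a) (\col_(i < N) (z - i%:R / N%:R)).
Definition absC (w : R) : C := col_mx (\col_(i < 1) w) (\col_(i < N) (- w)).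
Definition carry (h : S) : 'cV[R]_k := usubmx h.
Definition partU (h : S) : C := usubmx (dsubmx h).
Definition partV (h : S) : C := dsubmx (dsubmx h).
Definition mkS (c : 'cV[R]_k) (U V : C) : S := col_mx c (col_mx U V).
Definition halfabs (c : C) : R := (acc c + (\sum_(i < N) (teeth c) i 0) / N%:R) / 2.
Definition stepC (r : nat) (c : C) : C := mkC (acc c - qq N ^+ r * PS (teeth c)) (ZS (teeth c)).

Definition PA (s : 'cV[R]_k) : S :=
  mkS (\col_i (s i 0 + 1)) (absC (s ja 0 + s jb 0)) (absC (s ja 0 - s jb 0)).
Definition P0 (h : S) : S :=
  mkS (carry h) (mkC (halfabs (partU h)) (halfabs (partU h)))
      (mkC (halfabs (partV h)) (halfabs (partV h))).
Definition Pr (r : nat) (h : S) : S := mkS (carry h) (stepC r (partU h)) (stepC r (partV h)).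
Definition Out (h : S) : 'cV[R]_k :=
  \col_i (if i == jb then acc (stepC L.-1 (partU h)) - acc (stepC L.-1 (partV h))
          else (carry h) i 0 - 1).

Fixpoint Hs (r : nat) (s : 'cV[R]_k) : S :=
  match r with
  | 0%N => rl (P0 (rl (PA s)))
  | r'.+1 => rl (Pr r' (Hs r' s))
  end.
Definition Block (s : 'cV[R]_k) : 'cV[R]_k := Out (Hs L.-1 s).

Lemma aff_colfun {n m} {f : 'I_m -> 'cV[R]_n -> R} :
  (forall i, saff (f i)) -> affine (fun x => \col_i f i x).
Proof.
move=> h; apply: aff_entries => i; apply: saff_ext (h i) _ => x; by rewrite mxE.
Qed.

Lemma saff_acc {n} {P : 'cV[R]_n -> C} : affine P -> saff (fun x => acc (P x)).
Proof. by move=> hP; apply: saff_ext (saff_aff ord0 (aff_comp hP (aff_usub 1 N))) _. Qed.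

Lemma saff_teeth {n} {P : 'cV[R]_n -> C} (i : 'I_N) : affine P -> saff (fun x => teeth (P x) i 0).
Proof. by move=> hP; apply: saff_ext (saff_aff i (aff_comp hP (aff_dsub 1 N))) _. Qed.

Lemma aff_mkC {n} {f g : 'cV[R]_n -> R} : saff f -> saff g -> affine (fun x => mkC (f x) (g x)).
Proof.
move=> hf hg; apply: aff_col.
  by apply: aff_colfun => i.
by apply: aff_colfun => i; apply: saff_sub hg (saff_const _).
Qed.

Lemma aff_absC {n} {f : 'cV[R]_n -> R} : saff f -> affine (fun x => absC (f x)).
Proof.
move=> hf; apply: aff_col; apply: aff_colfun => i //; exact: saff_opp.
Qed.

Lemma aff_mkS {n} {c : 'cV[R]_n -> 'cV[R]_k} {U V : 'cV[R]_n -> C} :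
  affine c -> affine U -> affine V -> affine (fun x => mkS (c x) (U x) (V x)).
Proof. by move=> hc hU hV; apply: aff_col => //; apply: aff_col. Qed.

Lemma aff_carry : affine carry.
Proof. exact: aff_usub. Qed.
Lemma aff_partU : affine partU.
Proof. exact: (aff_comp (aff_dsub _ _) (aff_usub _ _)). Qed.
Lemma aff_partV : affine partV.
Proof. exact: (aff_comp (aff_dsub _ _) (aff_dsub _ _)). Qed.

Lemma saff_halfabs {n} {P : 'cV[R]_n -> C} : affine P -> saff (fun x => halfabs (P x)).
Proof.
move=> hP; rewrite /halfabs.
have H := saff_scale (2^-1) (saff_add (saff_acc hP) (saff_scale (N%:R^-1)
   (saff_sum N (fun i x => teeth (P x) i 0) (fun i => saff_teeth i hP)))).
by apply: saff_ext H _ => x; rewrite mulrC [_ / N%:R]mulrC.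
Qed.

Lemma aff_stepC r {n} {P : 'cV[R]_n -> C} : affine P -> affine (fun x => stepC r (P x)).
Proof.
move=> hP; apply: aff_mkC.
  apply: saff_sub (saff_acc hP) _; apply: saff_scale.
  by apply: saff_sum => i; apply: saff_scale; apply: saff_teeth.
by apply: saff_sum => i; apply: saff_scale; apply: saff_teeth.
Qed.

Lemma aff_PA : affine PA.
Proof.
apply: aff_mkS.
- by apply: aff_colfun => i; apply: saff_add (saff_coord _) (saff_const _).
- by apply: aff_absC; apply: saff_add; apply: saff_coord.
- by apply: aff_absC; apply: saff_sub; apply: saff_coord.
Qed.

Lemma aff_P0 : affine P0.
Proof.
apply: aff_mkS; first exact: aff_carry.
  by apply: aff_mkC; apply: saff_halfabs; exact: aff_partU.
by apply: aff_mkC; apply: saff_halfabs; exact: aff_partV.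
Qed.

Lemma aff_Pr r : affine (Pr r).
Proof.
apply: aff_mkS; first exact: aff_carry.
  exact: (aff_stepC r aff_partU).
exact: (aff_stepC r aff_partV).
Qed.

Lemma aff_Out : affine Out.
Proof.
apply: aff_colfun => i; case: (i == jb).
  by apply: saff_sub; apply: saff_acc; apply: aff_stepC; [exact: aff_partU | exact: aff_partV].
by apply: saff_sub (saff_const _); apply: saff_aff; exact: aff_carry.
Qed.

Lemma NNv_Hs r : NNv (k + ((1 + N) + (1 + N))) r.+2 (Hs r).
Proof.
elim: r => [|r IH] /=.
  have h1 := NNv_layer1 aff_PA (leqnn _).
  have h2 := NNv_layer1 aff_P0 (leqnn _).
  exact: (NNv_comp h1 _ _ _ h2).
have h2 := NNv_layer1 (aff_Pr r) (leqnn _).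
have := NNv_comp IH _ _ _ h2; by rewrite addn1.
Qed.

Lemma NNv_Block : NNv (k + ((1 + N) + (1 + N))) L.+1 Block.
Proof.
have := NNv_comp (NNv_Hs L.-1) _ _ _ (NNv_affine _ aff_Out).
by rewrite addn0 prednK.
Qed.


Lemma rl_rl {m} (v : 'cV[R]_m) : rl (rl v) = rl v.
Proof.
apply/matrixP => i j; rewrite !mxE relu_id //; exact: relu_ge0.
Qed.

Lemma rl_colfun {m} (f : 'I_m -> R) : rl (\col_i f i) = \col_i relu (f i).
Proof. by apply/matrixP => i j; rewrite !mxE. Qed.

Definition chainSt (r : nat) (w : R) : C :=
  col_mx (\col_(i < 1) Acc N r w) (\col_(i < N) tooth N (Zit N r w) i).

Lemma rl_mkC (a z : R) : rl (mkC a z) = col_mx (\col_(i < 1) relu a) (\col_(i < N) tooth N z i).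
Proof. by rewrite /mkC map_col_mx !rl_colfun. Qed.

Lemma acc_chain r w : acc (chainSt r w) = Acc N r w.
Proof. by rewrite /acc /chainSt col_mxKu mxE. Qed.

Lemma ZS_chain r w : ZS (teeth (chainSt r w)) = Zit N r.+1 w.
Proof.
rewrite /ZS /teeth /chainSt col_mxKd /Zit /= /Zf; apply: eq_bigr => i _; by rewrite mxE.
Qed.

Lemma PS_chain r w : PS (teeth (chainSt r w)) = psi N (Zit N r w).
Proof.
rewrite /PS /teeth /chainSt col_mxKd /psi; apply: eq_bigr => i _; by rewrite mxE.
Qed.

Lemma acc_step_chain r w : acc (stepC r (chainSt r w)) = Acc N r.+1 w.
Proof. by rewrite /stepC /acc /mkC col_mxKu mxE -/(acc _) acc_chain PS_chain. Qed.

Lemma rl_step r u : 0 <= u <= 1 -> rl (stepC r (chainSt r u)) = chainSt r.+1 u.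
Proof.
move=> hu; rewrite /stepC rl_mkC acc_chain PS_chain ZS_chain /chainSt.
by rewrite relu_id //; exact: (Acc_ge0 N0 r.+1 hu).
Qed.

Lemma rl_init u : 0 <= u <= 1 -> rl (mkC u u) = chainSt 0 u.
Proof. by move=> /andP [u0 _]; rewrite rl_mkC /chainSt relu_id. Qed.

Lemma carry_mkS c U V : carry (mkS c U V) = c.
Proof. by rewrite /carry /mkS col_mxKu. Qed.
Lemma partU_mkS c U V : partU (mkS c U V) = U.
Proof. by rewrite /partU /mkS col_mxKd col_mxKu. Qed.
Lemma partV_mkS c U V : partV (mkS c U V) = V.
Proof. by rewrite /partV /mkS col_mxKd col_mxKd. Qed.
Lemma rl_mkS c U V : rl (mkS c U V) = mkS (rl c) (rl U) (rl V).
Proof. by rewrite /mkS !map_col_mx. Qed.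

Lemma halfabs_abs w : halfabs (rl (absC w)) = `|w| / 2.
Proof.
rewrite /halfabs /acc /teeth /absC map_col_mx col_mxKu col_mxKd !rl_colfun mxE.
under eq_bigr do rewrite mxE.
rewrite sumr_const card_ord -mulr_natr -relu_abs; congr (_ / 2).
by field; exact: Nr_neq0 N0.
Qed.

Definition cv (s : 'cV[R]_k) := rl (\col_i (s i 0 + 1)).

Lemma Hs_sem r (s : 'cV[R]_k) : in_cube s ->
  Hs r s = mkS (cv s) (chainSt r (`|s ja 0 + s jb 0| / 2)) (chainSt r (`|s ja 0 - s jb 0| / 2)).
Proof.
move=> hs.
have ha := hs ja; have hb := hs jb.
elim: r => [|r IH] /=.
  rewrite /PA rl_mkS /P0 carry_mkS partU_mkS partV_mkS !halfabs_abs rl_mkS rl_rl.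
  by rewrite !rl_init //; apply: half_abs_01 => //; move: hb => /andP [? ?]; apply/andP; split; lra.
rewrite IH /Pr carry_mkS partU_mkS partV_mkS rl_mkS rl_rl !rl_step //.
  by apply: half_abs_01 => //; move: hb => /andP [? ?]; apply/andP; split; lra.
exact: half_abs_01.
Qed.

Lemma Block_sem (s : 'cV[R]_k) : in_cube s ->
  Block s = \col_i (if i == jb then Mf N L (s ja 0) (s jb 0) else s i 0).
Proof.
move=> hs; rewrite /Block Hs_sem // /Out carry_mkS partU_mkS partV_mkS !acc_step_chain prednK //.
apply/matrixP => i j; rewrite !mxE.
case: (i == jb) => //.
rewrite relu_id; first by ring.
by have := hs i; move=> /andP [? ?]; lra.
Qed.

End Block.

Section Chain.
Context {R : realType}.
Variables N L K : nat.
Hypothesis N0 : (0 < N)%N.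
Hypothesis L0 : (0 < L)%N.

Fixpoint ChainNet (j : nat) (s : 'cV[R]_K.+1) : 'cV[R]_K.+1 :=
  match j with
  | 0%N => s
  | j'.+1 => Block R N L K.+1 (inord j') (inord j'.+1) (ChainNet j' s)
  end.

Lemma NNv_Chain j : NNv (K.+1 + ((1 + N) + (1 + N))) (j * L.+1) (ChainNet j).
Proof.
elim: j => [|j IH] /=.
  by apply: NNv_affine; exact: aff_id.
have := NNv_comp IH _ _ _ (NNv_Block R N L K.+1 L0 (inord j) (inord j.+1)).
by rewrite mulSn [(L.+1 + _)%N]addnC.
Qed.

Fixpoint pv (y : nat -> R) (j : nat) : R :=
  match j with
  | 0%N => y 0%N
  | j'.+1 => Mf N L (pv y j') (y j'.+1)
  end.

Lemma Chain_sem (s : 'cV[R]_K.+1) : in_cube s -> forall j, (j <= K)%N ->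
  [/\ in_cube (ChainNet j s),
      (ChainNet j s) (inord j) 0 = pv (fun i => s (inord i) 0) j &
      forall i : 'I_K.+1, (j < i)%N -> (ChainNet j s) i 0 = s i 0].
Proof.
move=> hs; elim=> [|j IH] hj /=.
  by split.
have [hc hp hu] := IH (ltnW hj).
set t := ChainNet j s in hc hp hu *.
have hjv : (j.+1 < K.+1)%N by [].
have Ej1 : t (inord j.+1) 0 = s (inord j.+1) 0 by apply: hu; rewrite inordK.
rewrite (Block_sem _ _ _ _ N0 L0) //; split.
- move=> i; rewrite mxE; case: (i == inord j.+1) => //.
  exact: (Mf_range N0 (hc (inord j)) (hc (inord j.+1))).
- by rewrite mxE eqxx hp Ej1.
- move=> i hi; rewrite mxE; case: eqP => [E|_]; last first.
    by apply: hu; apply: ltnW.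
  by move: hi; rewrite E inordK // ltnn.
Qed.

Lemma pv_ext (y y' : nat -> R) j : (forall i, (i <= j)%N -> y i = y' i) -> pv y j = pv y' j.
Proof.
elim: j => [|j IH] h /=; first by apply: h.
by rewrite IH ?h // => i hi; apply: h; apply: leqW.
Qed.

Definition ycube (y : nat -> R) (j : nat) := forall i, (i <= j)%N -> -1 <= y i <= 1.

Lemma pv_range {y j} : ycube y j -> -1 <= pv y j <= 1.
Proof.
elim: j => [|j IH] h /=; first by apply: h.
have hy : ycube y j by move=> i hi; apply: h; apply: leqW.
exact: (Mf_range N0 (IH hy) (h j.+1 (leqnn _))).
Qed.

Lemma pv_err y j : ycube y j ->
  `|pv y j - \prod_(i < j.+1) y i| <= j%:R * (qq N ^+ L / 4).
Proof.
elim: j => [|j IH] h /=.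
  by rewrite big_ord1 subrr normr0 mul0r.
have hy : ycube y j by move=> i hi; apply: h; apply: leqW.
have hp := pv_range hy.
have e1 := Mf_err (L:=L) N0 hp (h j.+1 (leqnn _)).
have e2 := IH hy.
rewrite big_ord_recr /=.
set P := \prod_(i < j.+1) y i in e2 *.
set M := Mf N L (pv y j) (y j.+1) in e1 *.
have -> : M - P * y j.+1 = (M - pv y j * y j.+1) + (pv y j - P) * y j.+1 by ring.
apply: (le_trans (ler_normD _ _)).
have hyj : `|y j.+1| <= 1 by rewrite ler_norml; exact: h.
have e3 : `|(pv y j - P) * y j.+1| <= j%:R * (qq N ^+ L / 4).
  rewrite normrM; apply: le_trans e2; rewrite -{2}(mulr1 `|_ - _|).
  by apply: ler_wpM2l.
have -> : j.+1%:R * (qq N ^+ L / 4) = qq N ^+ L / 4 + j%:R * (qq N ^+ L / 4) :> R by rewrite -natr1; ring.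
exact: lerD.
Qed.

Lemma pv_lip y y' j : ycube y j -> ycube y' j ->
  `|pv y j - pv y' j| <= 3 ^+ j * \sum_(i < j.+1) `|y i - y' i|.
Proof.
elim: j => [|j IH] h h' /=.
  by rewrite expr0 mul1r big_ord1.
have hy : ycube y j by move=> i hi; apply: h; apply: leqW.
have hy' : ycube y' j by move=> i hi; apply: h'; apply: leqW.
have e := Mf_lip (L:=L) N0 (pv_range hy) (h j.+1 (leqnn _)) (pv_range hy') (h' j.+1 (leqnn _)).
apply: (le_trans e).
have e2 := IH hy hy'.
rewrite big_ord_recr /= exprS.
set S := \sum_(i < j.+1) `|y i - y' i| in e2 *.
set D := `|y j.+1 - y' j.+1|.
have hS : 0 <= S by apply: sumr_ge0 => i _.
have hD : 0 <= D by exact: normr_ge0.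
have h3 : 1 <= 3 ^+ j :> R by apply: exprn_ege1; lra.
have : 3 ^+ j * S + D <= 3 ^+ j * (S + D).
  rewrite mulrDr lerD2l -{1}(mul1r D); exact: ler_wpM2r.
move=> hh; rewrite -mulrA; apply: ler_wpM2l; first lra.
move: e2 hh; set X := `|pv y j - pv y' j|; move=> e2 hh; lra.
Qed.

End Chain.

Section Seq.
Context {R : realType}.
Variable d : nat.
Variable alpha : 'I_d -> nat.

Definition sq : seq nat := flatten [seq nseq (alpha i) (nat_of_ord i) | i <- enum 'I_d].
Definition Xv (x : 'cV[R]_d) (w : nat) : R := \sum_(i < d) (if w == nat_of_ord i then x i 0 else 0).
Definition yv (x : 'cV[R]_d) (j : nat) : R := Xv x (nth 0%N sq j).

Lemma size_sq : size sq = (\sum_(i < d) alpha i)%N.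
Proof.
rewrite size_flatten /shape -map_comp sumnE big_map big_enum /=.
by apply: eq_bigr => i _; rewrite size_nseq.
Qed.

Lemma sum_sq (F : nat -> R) : \sum_(w <- sq) F w = \sum_(i < d) F i *+ alpha i.
Proof.
rewrite big_flatten big_map big_enum /=; apply: eq_bigr => i _; rewrite big_nseq.
by elim: (alpha i) => [|n IH] //=; rewrite IH mulrS.
Qed.

Lemma prod_sq (F : nat -> R) : \prod_(w <- sq) F w = \prod_(i < d) F i ^+ alpha i.
Proof.
rewrite big_flatten big_map big_enum /=; apply: eq_bigr => i _; rewrite big_nseq.
by elim: (alpha i) => [|n IH] //=; rewrite IH exprS.
Qed.

Lemma sum_yv (F : nat -> R) : \sum_(j < size sq) F (nth 0%N sq j) = \sum_(i < d) F i *+ alpha i.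
Proof. by rewrite -sum_sq (big_nth 0%N) big_mkord. Qed.

Lemma prod_yv (F : nat -> R) : \prod_(j < size sq) F (nth 0%N sq j) = \prod_(i < d) F i ^+ alpha i.
Proof. by rewrite -prod_sq (big_nth 0%N) big_mkord. Qed.

Lemma Xv_val (x : 'cV[R]_d) (i : 'I_d) : Xv x i = x i 0.
Proof.
rewrite /Xv (bigD1 i) //= eqxx big1 ?addr0 // => l hl.
by case: eqP => // E; case/eqP: hl; apply: ord_inj; rewrite E.
Qed.

Lemma Xv_cube (x : 'cV[R]_d) w : in_cube x -> -1 <= Xv x w <= 1.
Proof.
move=> hx; case: (ltnP w d) => hw.
  by have := Xv_val x (Ordinal hw) => /= ->; exact: hx.
rewrite /Xv big1 => [|i _]; first lra.
by case: eqP => // E; move: (ltn_ord i); rewrite -E ltnNge hw.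
Qed.

Lemma affine_yv m : affine (fun x : 'cV[R]_d => \col_(j < m) yv x j).
Proof.
apply: aff_entries => j; apply: saff_ext (saff_sum d (fun i x => if nth 0%N sq j == nat_of_ord i then x i 0 else 0) _) _.
  by move=> i; case: (_ == _); [exact: saff_coord | exact: saff_const].
by move=> x; rewrite mxE.
Qed.

End Seq.

Lemma eps_bound {R : realType} (W L : nat) : (1 <= W)%N ->
  qq W ^+ L / 4 <= 6 * (W%:R ^- L : R).
Proof.
move=> hW.
have W1 : 1 <= W%:R :> R by rewrite ler1n.
have Wi0 : 0 <= W%:R^-1 :> R by rewrite invr_ge0 ler0n.
have Wi1 : W%:R^-1 <= 1 :> R by rewrite invr_le1 // ?unitfE ?pnatr_eq0 -?lt0n // (lt_le_trans ltr01).
have q1 : qq W <= W%:R^-1 :> R.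
  rewrite /qq expr2 invfM; apply: (le_trans (ler_wpM2l Wi0 Wi1)); by rewrite mulr1.
have q0 : 0 <= qq W :> R by rewrite /qq invr_ge0 exprn_ge0 // ler0n.
have h : qq W ^+ L <= W%:R ^- L :> R.
  rewrite -exprVn; apply: lerXn2r => //; rewrite nnegrE //.
have h0 : 0 <= qq W ^+ L :> R by rewrite exprn_ge0.
lra.
Qed.
From mathcomp Require Import zify.

Theorem corollary33 (R : realType) (d : nat) (alpha : 'I_d -> nat) (k : nat)
  (hk : k = (\sum_(i < d) alpha i)%N) (hk2 : (2 <= k)%N)
  (W L : nat) (hW : (1 <= W)%N) (hL : (1 <= L)%N) :
  exists phi : 'cV[R]_d -> R,
    NN (9 * W + k - 1) ((k - 1) * (L + 1)) phi /\
    forall x y : 'cV[R]_d, in_cube x -> in_cube y ->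
      (-1 <= phi x <= 1) /\
      (`|phi x - monomial alpha x| <= 6 * (k - 1)%:R * (W%:R ^- L)) /\
      (`|phi x - phi y| <= 7 ^+ (k - 1) * (\max_(i < d) alpha i)%:R * norm1 (x - y)).
Proof.
case: k hk hk2 => [|K] hk hk2 //.
have W0 : (0 < W)%N by [].
have L0 : (0 < L)%N by [].
have Hs : size (sq d alpha) = K.+1 by rewrite size_sq hk.
pose E := fun x : 'cV[R]_d => \col_(j < K.+1) yv d alpha x j.
exists (fun x => ChainNet W L K K (E x) (inord K) 0).
have hK : (K.+1 - 1)%N = K by rewrite subn1.
rewrite hK.
split.
  exists (K * L.+1)%N; first by rewrite addn1.
  apply: NNv_entry.
  apply: (NNv_mono _ (NNv_pre (NNv_Chain W L K L0 K) _ E (affine_yv d alpha K.+1))).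
  lia.
have hE : forall x : 'cV[R]_d, in_cube x -> in_cube (E x).
  move=> x hx; rewrite /in_cube => i; rewrite /E mxE; exact: (Xv_cube d x _ hx).
have hphi : forall x : 'cV[R]_d, in_cube x -> ChainNet W L K K (E x) (inord K) 0 = pv W L (yv d alpha x) K.
  move=> x hx; have [_ h2 _] := Chain_sem W L K W0 L0 (E x) (hE x hx) K (leqnn K).
  rewrite h2; apply: pv_ext => i hi; by rewrite /E mxE inordK.
have hyc : forall x : 'cV[R]_d, in_cube x -> ycube (yv d alpha x) K.
  by move=> x hx i hi; exact: (Xv_cube d x _ hx).
move=> x y hx hy.
rewrite !hphi //.
split; first exact: (pv_range W L W0 (hyc x hx)).
split.
  have Hm : monomial alpha x = \prod_(j < K.+1) yv d alpha x j.
    rewrite /monomial.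
    have := prod_yv d alpha (Xv d x); rewrite Hs => ->.
    by apply: eq_bigr => i _; rewrite (Xv_val d).
  rewrite Hm; apply: le_trans (pv_err W L W0 _ K (hyc x hx)) _.
  have e := eps_bound (R:=R) W L hW.
  have k0 : 0 <= K%:R :> R by rewrite ler0n.
  rewrite [6 * _]mulrC -mulrA; exact: (ler_wpM2l k0 e).
apply: le_trans (pv_lip W L W0 _ _ K (hyc x hx) (hyc y hy)) _.
have Hsum : \sum_(i < K.+1) `|yv d alpha x i - yv d alpha y i| =
            \sum_(i < d) `|x i 0 - y i 0| *+ alpha i.
  have := sum_yv d alpha (fun w => `|Xv d x w - Xv d y w|); rewrite Hs => ->.
  by apply: eq_bigr => i _; rewrite !(Xv_val d).
rewrite Hsum.
set M := (\max_(i < d) alpha i)%N.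
have n0 : 0 <= norm1 (x - y) by apply: sumr_ge0 => i _.
have h1 : \sum_(i < d) `|x i 0 - y i 0| *+ alpha i <= M%:R * norm1 (x - y).
  rewrite /norm1 mulr_sumr; apply: ler_sum => i _.
  rewrite !mxE -[_ *+ alpha i]mulr_natl; apply: ler_wpM2r => //.
  by rewrite ler_nat; exact: leq_bigmax.
have h3 : 3 ^+ K <= 7 ^+ K :> R.
  by apply: lerXn2r; rewrite ?nnegrE //; lra.
have hM : 0 <= M%:R * norm1 (x - y) :> R by rewrite mulr_ge0 // ler0n.
have s0 : 0 <= \sum_(i < d) `|x i 0 - y i 0| *+ alpha i :> R.
  by apply: sumr_ge0 => i _; rewrite mulrn_wge0.
rewrite -mulrA.
apply: le_trans (ler_wpM2l _ h1) _; first by rewrite exprn_ge0.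
by apply: ler_wpM2r.
Qed.
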